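(* Let $w=(1+\sqrt{-3})/2$. Suppose that every Eisenstein integer $a+bw$ with integers $a>3$, $b>3$ can be written as $p+q$ with $p,q$ Eisenstein primes lying in $Q=\{x+yw : x,y\in\mathbb{Z},\ x>0,\ y>0\}$. Then there are infinitely many positive integers $n$ such that $n^2+n+1$ is a rational prime.
   Context: Here $w=(1+\sqrt{-3})/2$ (a primitive sixth root of unity, $w^3=-1$). Eisenstein integers are the elements $a+bw$ with $a,b\in\mathbb{Z}$, forming the ring $\mathbb{Z}[w]$, with norm $N(a+bw)=|a+bw|^2=a^2+ab+b^2$. An Eisenstein prime is an irreducible (equivalently, prime) element of $\mathbb{Z}[w]$. $Q$ denotes the set of Eisenstein integers $a+bw$ with $a>0$ and $b>0$. *)

(* Defs.v *)
From HB Require Import structures.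
From mathcomp Require Import all_boot all_order all_algebra.
Set Implicit Arguments. Unset Strict Implicit. Unset Printing Implicit Defensive.
Import Order.TTheory GRing.Theory Num.Theory.
Local Open Scope ring_scope.

(* The Eisenstein integer  re + im * w. *)
Record eis := Eis { re : int; im : int }.

Definition eis_zero : eis := Eis 0 0.
Definition eis_one : eis := Eis 1 0.
Definition eis_add (x y : eis) : eis := Eis (re x + re y) (im x + im y).
(* (a + b w)(c + d w) = (ac - bd) + (ad + bc + bd) w, using w^2 = w - 1 *)
Definition eis_mul (x y : eis) : eis :=
  Eis (re x * re y - im x * im y) (re x * im y + im x * re y + im x * im y).

Definition eis_norm (x : eis) : int := re x ^+ 2 + re x * im x + im x ^+ 2.

Definition eis_unit (x : eis) : Prop := exists y, eis_mul x y = eis_one.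

(* Eisenstein prime = irreducible element of Z[w] *)
Definition eis_prime (p : eis) : Prop :=
  p <> eis_zero /\ ~ eis_unit p /\
  forall x y, p = eis_mul x y -> eis_unit x \/ eis_unit y.

Definition inQ (x : eis) : Prop := 0 < re x /\ 0 < im x.

(* Main.v *)
Require Import Defs.
From HB Require Import structures.
From mathcomp Require Import all_boot all_order all_algebra.
From mathcomp Require Import ring lra zify.
Import Order.TTheory GRing.Theory Num.Theory.
Local Open Scope ring_scope.

Lemma eis_ext x y : re x = re y -> im x = im y -> x = y.
Proof. by case: x; case: y => /= ? ? ? ? -> ->. Qed.

Ltac eis_ring := repeat match goal with x : eis |- _ => destruct x end;
  apply: eis_ext; rewrite /eis_mul /eis_add /= ; ring.

Definition eis_sub (x y : eis) : eis := Eis (re x - re y) (im x - im y).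
Definition eis_conj (x : eis) : eis := Eis (re x + im x) (- im x).
Definition dvd (g x : eis) := exists c, x = eis_mul g c.

Lemma eis_mulC x y : eis_mul x y = eis_mul y x.
Proof. eis_ring. Qed.
Lemma eis_mulA x y z : eis_mul x (eis_mul y z) = eis_mul (eis_mul x y) z.
Proof. eis_ring. Qed.
Lemma eis_mul1 x : eis_mul x eis_one = x.
Proof. eis_ring. Qed.
Lemma norm_mul x y : eis_norm (eis_mul x y) = eis_norm x * eis_norm y.
Proof. case: x; case: y => *; rewrite /eis_norm /=; ring. Qed.
Lemma norm_ge0 x : 0 <= eis_norm x.
Proof. case: x => a b; rewrite /eis_norm /=. nia. Qed.
Lemma norm_eq0 x : eis_norm x = 0 -> x = eis_zero.
Proof. case: x => a b; rewrite /eis_norm /= => H. apply: eis_ext => /=; nia. Qed.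
Lemma unit_norm x : eis_unit x -> eis_norm x = 1.
Proof.
case=> y H. have := congr1 eis_norm H. rewrite norm_mul /eis_norm /= => E.
have := norm_ge0 x; have := norm_ge0 y; move: E.
rewrite /eis_norm /=. move: (_ + _ + _) => a; move: (_ + _ + _) => b.
move=> E ha hb. have [b0|b1] : b = 0 \/ 1 <= b by lia. - subst; lia. - nia.
Qed.
Lemma not_unit x : eis_norm x != 1 -> ~ eis_unit x.
Proof. by move=> /eqP H /unit_norm. Qed.
Lemma not_prime_mul x y : eis_norm x != 1 -> eis_norm y != 1 -> ~ eis_prime (eis_mul x y).
Proof. move=> /not_unit Hx /not_unit Hy [_ [_ H]]. by case: (H x y erefl). Qed.

Lemma round_div (A n : int) : 0 < n -> exists q r, A = q * n + r /\ - n <= 2 * r <= n.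
Proof.
move=> n0. have E := divz_eq A n. have H1 := modz_ge0 A (lt0r_neq0 n0).
have H2 := ltz_pmod A n0.
move: E H1 H2; set q := (A %/ n)%Z; set r := (A %% n)%Z => E H1 H2.
case: (lerP (2 * r) n) => H3.
  by exists q, r; split => //; lia.
exists (q + 1), (r - n); split; lia.
Qed.

Lemma euclid x d : d <> eis_zero -> exists q rho,
  x = eis_add (eis_mul q d) rho /\ eis_norm rho < eis_norm d.
Proof.
move=> dn0. have n0 : 0 < eis_norm d.
  rewrite lt0r; apply/andP; split; last exact: norm_ge0.
  by apply/eqP => /norm_eq0.
set c := eis_mul x (eis_conj d).
have [qA [rA [EA BA]]] := @round_div (re c) _ n0.
have [qB [rB [EB BB]]] := @round_div (im c) _ n0.
set q := Eis qA qB.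
exists q, (eis_sub x (eis_mul q d)); split; first by eis_ring.
have Hr : 4 * (rA ^+ 2 + rA * rB + rB ^+ 2) < 4 * (eis_norm d) ^+ 2.
  move: BA BB n0; nia.
have Hid : eis_norm (eis_sub x (eis_mul q d)) * eis_norm d = rA ^+ 2 + rA * rB + rB ^+ 2.
  have -> : rA = re c - qA * eis_norm d by lia.
  have -> : rB = im c - qB * eis_norm d by lia.
  rewrite /c /q; clear; case: x; case: d => *; rewrite /eis_norm /=; ring.
have := norm_ge0 (eis_sub x (eis_mul q d)). move: Hid Hr n0. nia.
Qed.

Lemma eis_dec (x : eis) : x = eis_zero \/ x <> eis_zero.
Proof.
case: x => a b; case: (a =P 0) => [->|ha]; case: (b =P 0) => [->|hb]; auto;
  by right => -[].
Qed.

Definition inI z R g := exists al be, g = eis_add (eis_mul al z) (eis_mul be R).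

Lemma sub_of_add x y r : x = eis_add y r -> r = eis_sub x y.
Proof. move=> ->; eis_ring. Qed.
Arguments sub_of_add {x y r}.

Lemma gcd_aux z R (n : nat) : forall g, inI z R g -> g <> eis_zero ->
  eis_norm g < n%:Z -> exists g', [/\ inI z R g', g' <> eis_zero, dvd g' z & dvd g' R].
Proof.
elim: n => [|n IH] g Hg gn0 Hn.
  by have := norm_ge0 g; lia.
have [q1 [r1 [E1 L1]]] := @euclid z g gn0.
case: (eis_dec r1) => [r10|r1n0]; last first.
  apply: (IH r1) => //; last by lia.
  case: Hg => al [be Eg]; rewrite (sub_of_add E1) Eg.
  exists (eis_sub eis_one (eis_mul q1 al)), (eis_sub eis_zero (eis_mul q1 be)); eis_ring.
have [q2 [r2 [E2 L2]]] := @euclid R g gn0.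
case: (eis_dec r2) => [r20|r2n0]; last first.
  apply: (IH r2) => //; last by lia.
  case: Hg => al [be Eg]; rewrite (sub_of_add E2) Eg.
  exists (eis_sub eis_zero (eis_mul q2 al)), (eis_sub eis_one (eis_mul q2 be)); eis_ring.
exists g; split => //.
  by exists q1; rewrite E1 r10; eis_ring.
by exists q2; rewrite E2 r20; eis_ring.
Qed.

Lemma lemA (y r s : int) : 0 < y -> eis_prime (Eis 1 y) -> 1 < r -> 1 < s ->
  y ^+ 2 + y + 1 = r * s -> False.
Proof.
move=> y0 [zn0 [zu Hz]] r1 s1 Em.
set z := Eis 1 y; set R := Eis r 0.
have [g [Hg gn0 [h Eh] [c Ec]]] :
    exists g', [/\ inI z R g', g' <> eis_zero, dvd g' z & dvd g' R].
  apply: (@gcd_aux z R `|eis_norm z|%N.+1 z) => //.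
    by exists eis_one, eis_zero; eis_ring.
  have H0 := norm_ge0 z; rewrite -addn1 PoszD gez0_abs //; lia.
case: (Hz _ _ Eh) => [[g' Eg']|[h' Eh']].
  case: Hg => al [be Eg].
  have E1 : eis_one = eis_add (eis_mul (eis_mul al g') z) (eis_mul (eis_mul be g') R).
    by rewrite -Eg' Eg; eis_ring.
  move: E1; rewrite /z /R; case: (eis_mul al g') => u1 u2; case: (eis_mul be g') => v1 v2.
  move=> /(congr1 (fun t => (re t, im t))) /= [].
  move=> e1 e2.
  have Hy : y = r * (y * v1 - v2 - u2 * s).
    have e1y := congr1 (fun t => y * t) e1. have Emu := congr1 (fun t => u2 * t) Em. simpl in e1y, Emu. lia.
  set t := (y * v1 - v2 - u2 * s) in Hy.
  have H1 : 1 = r * (s - r * t ^+ 2 - t) by rewrite Hy in Em; nia.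
  move: H1; set X := (s - _ - _) => H1.
  have [X0|X1] : X <= 0 \/ 1 <= X by lia. - nia. - nia.
have ER : R = eis_mul z (eis_mul h' c).
  by rewrite Ec Eh -!eis_mulA [eis_mul h _]eis_mulA Eh' [eis_mul eis_one _]eis_mulC eis_mul1.
move: ER; rewrite /z /R; case: (eis_mul h' c) => w1 w2.
move=> /(congr1 (fun t => (re t, im t))) /= [] e1 e2.
have a1 := congr1 (fun t => (1 + y) * t) e1.
have a2 := congr1 (fun t => y * t) e2.
have a3 := congr1 (fun t => w1 * t) Em.
have a4 := congr1 (fun t => y * t) e1.
have a5 := congr1 (fun t => w2 * t) Em.
simpl in a1, a2, a3, a4, a5.
have F1 : r * ((1 + y) - s * w1) = 0 by lia.
have F2 : r * (- y - s * w2) = 0 by lia.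
have G1 : 1 + y = s * w1.
  by move/eqP: F1; rewrite mulf_eq0 => /orP [/eqP|/eqP]; lia.
have G2 : - y = s * w2.
  by move/eqP: F2; rewrite mulf_eq0 => /orP [/eqP|/eqP]; lia.
have : 1 = s * (w1 + w2) by lia.
move: (w1 + w2) => X H1.
have [X0|X1] : X <= 0 \/ 1 <= X by lia. - nia. - nia.
Qed.

Lemma primeA (n : nat) : (0 < n)%N -> eis_prime (Eis 1 n%:Z) -> prime (n ^ 2 + n + 1).
Proof.
move=> n0 Hp; case: (boolP (prime _)) => // /primePn [H|[d /andP[d1 dm] dv]].
  by exfalso; move: H; rewrite ltnNge => /negP; apply; nia.
exfalso.
have Em := divnK dv.
have s1 : (1 < (n ^ 2 + n + 1) %/ d)%N.
  move: Em dm; move: ((n ^ 2 + n + 1) %/ d)%N => s Em dm; nia.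
apply: (@lemA n%:Z d%:Z ((n ^ 2 + n + 1) %/ d)%N%:Z) => //; try lia.
Qed.

Lemma re2_np (n : nat) : ~~ odd n -> (0 < n)%N -> ~ eis_prime (Eis 2 n%:Z).
Proof.
move=> ev n0. have E := odd_double_half n. rewrite (negbTE ev) add0n in E.
have -> : Eis 2 n%:Z = eis_mul (Eis 2 0) (Eis 1 (n./2)%:Z).
  apply: eis_ext; rewrite /= -{1}E -muln2; lia.
apply: not_prime_mul; rewrite /eis_norm /=; apply/eqP; lia.
Qed.

Lemma re3_np (k t : int) : 1 <= k -> 1 <= t ->
  ~ eis_prime (Eis 3 (t * (k ^+ 2 - 3 * k + 9) - k)).
Proof.
move=> k1 t1.
have -> : Eis 3 (t * (k ^+ 2 - 3 * k + 9) - k) =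
  eis_mul (Eis (k - 3) 3) (eis_mul (Eis 0 1) (Eis (t * k - 1) (- 3 * t))).
  apply: eis_ext; rewrite /=; ring.
apply: not_prime_mul; first by rewrite /eis_norm /=; apply/eqP; nia.
rewrite norm_mul /eis_norm /=; apply/eqP; nia.
Qed.

Definition dk (k : nat) : nat := ((k - 1) * (k - 2) + 7)%N.
Fixpoint Pn (N : nat) : nat := match N with 0 => 1%N | S n => (dk (S n) * Pn n)%N end.

Lemma dk_odd k : odd (dk k).
Proof.
rewrite /dk oddD /= addbT oddM. case: k => [|[|k]] //=.
rewrite !subSS !subn0 /=. by case: (odd k).
Qed.

Lemma Pn_odd N : odd (Pn N).
Proof. elim: N => //= n IH; by rewrite oddM dk_odd IH. Qed.

Lemma dk_dvd k N : (1 <= k <= N)%N -> (dk k %| Pn N)%N.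
Proof.
elim: N => [|n IH] /andP [k1 kN]; first by case: k k1 kN.
rewrite /=. have [kn|kn] := leqP k n.
  by apply: dvdn_mull; apply: IH; rewrite k1 kn.
have -> : k = n.+1 by apply/eqP; rewrite eqn_leq kN kn.
exact: dvdn_mulr.
Qed.

Lemma dk_int (k : nat) : (1 <= k)%N -> (dk k)%:Z = k%:Z ^+ 2 - 3 * k%:Z + 9.
Proof.
rewrite /dk; case: k => [|[|k]] // _.
rewrite !subSS !subn0 PoszD PoszM; lia.
Qed.

Lemma finish (N : nat) (y j : int) : 0 < y -> 0 < j -> eis_prime (Eis 1 y) ->
  eis_prime (Eis 3 j) -> y + j = (7 * Pn N)%N%:Z ->
  exists n : nat, (N < n)%N /\ prime (n ^ 2 + n + 1).
Proof.
case: y => [n|n] // n0 j0 Hp Hq E.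
have [Nn|nN] := ltnP N n.
  by exists n; split => //; apply: primeA => //; lia.
have n1 : (1 <= n)%N by lia.
have /dvdnP [e Ee] := @dk_dvd n N (introT andP (conj n1 nN)).
have e0 : (0 < e)%N.
  have := Pn_odd N; rewrite Ee; case: e {Ee} => //.
have Ej : j = (7 * e)%N%:Z * (n%:Z ^+ 2 - 3 * n%:Z + 9) - n%:Z.
  rewrite -dk_int // -PoszM -mulnA -Ee; lia.
exfalso. have H3 := @re3_np n%:Z (7 * e)%N%:Z. rewrite -Ej in H3.
by apply: H3 => //; lia.
Qed.

Lemma main_aux :
  (forall a b : int, (3 < a)%R -> (3 < b)%R ->
     exists p q : eis, eis_prime p /\ eis_prime q /\ inQ p /\ inQ q /\
                       Eis a b = eis_add p q) ->
  forall N : nat, exists n : nat, (N < n)%N /\ prime (n ^ 2 + n + 1)%N.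
Proof.
move=> H N.
have Po := Pn_odd N.
have P0 : (0 < Pn N)%N by case: (Pn N) Po.
have [p [q [Hp [Hq [[p1 p2] [[q1 q2] E]]]]]] := H 4 (7 * Pn N)%N%:Z erefl (ltac:(lia)).
move: E Hp Hq p1 p2 q1 q2; case: p => a1 b1; case: q => a2 b2 /=.
move=> /(congr1 (fun t => (re t, im t))) /= [] ea eb Hp Hq p1 p2 q1 q2.
have [a11|[a12|a13]] : a1 = 1 \/ a1 = 2 \/ a1 = 3 by lia.
- subst a1. have a23 : a2 = 3 by lia. subst a2.
  by apply: (@finish N b1 b2 p2 q2 Hp Hq); rewrite eb.
- exfalso. subst a1. have a22 : a2 = 2 by lia. subst a2.
  move: Hp Hq p2 q2 eb; case: b1 => [m1|m1] //; case: b2 => [m2|m2] // Hp Hq p2 q2 eb.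
  have em : (m1 + m2 = 7 * Pn N)%N by lia.
  have : odd (m1 + m2) by rewrite em oddM Po.
  rewrite oddD. case: (boolP (odd m1)) => o1 /=; last by move=> _; have := @re2_np m1 o1; apply; [lia | exact Hp].
  move=> o2; have := @re2_np m2; apply; [by rewrite o2 | lia | exact Hq].
- subst a1. have a21 : a2 = 1 by lia. subst a2.
  by apply: (@finish N b2 b1 q2 p2 Hq Hp); rewrite eb addrC.
Qed.

Local Close Scope ring_scope.

Theorem mainTheorem2 :
  (forall a b : int, (3 < a)%R -> (3 < b)%R ->
     exists p q : eis, eis_prime p /\ eis_prime q /\ inQ p /\ inQ q /\
                       Eis a b = eis_add p q) ->
  forall N : nat, exists n : nat, (N < n)%N /\ prime (n ^ 2 + n + 1).
Proof. exact: main_aux. Qed.
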